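(* Assume the context distribution is stationary, i.e. $p(x,t)=p(x)p(t)$ on $\mathcal{X}\times[0,T]$ and $p(x\mid t')=p(x)$. Suppose $\pi_0(a\mid x,t)>0$ for all $x\in\mathcal{X}$, $t\in[0,T]$, $a\in\mathcal{A}$; that $p(\phi(t'))>0$; and that $\Delta_q(x,t,t',a)=\Delta_{\hat f}(x,t,t',a)$ for all $x\in\mathcal{X}$, $a\in\mathcal{A}$ and $t\in[0,T]$ with $\mathbb{I}_\phi(t,t')=1$. Then the OPFV gradient estimator is unbiased: $\mathbb{E}_{\mathcal{D}}[\nabla_\zeta\hat V^{\mathrm{OPFV}}_{t'}(\pi_\zeta;\mathcal{D})]=\nabla_\zeta V_{t'}(\pi_\zeta)$.
   Context: Contexts $x\in\mathcal{X}$, finite action set $\mathcal{A}$, continuous time $t$, rewards $r\in[0,r_{\max}]$. Logged data $\mathcal{D}=\{(x_i,t_i,a_i,r_i)\}_{i=1}^n$: $n$ i.i.d. draws $(x,t)\sim p(x,t)$ supported on $\mathcal{X}\times[0,T]$, $a\sim\pi_0(a\mid x,t)$, $r\sim p(r\mid x,t,a)$; reward distributions defined for all $t\ge0$; $q(x,t,a)=\mathbb{E}[r\mid x,t,a]$. Target time $t'>T$. $\pi_\zeta(a\mid x,t)$ is a policy differentiable in a parameter vector $\zeta$, with score $s_\zeta(x,t,a)=\nabla_\zeta\log\pi_\zeta(a\mid x,t)$; $\nabla_\zeta V_{t'}(\pi_\zeta)=\mathbb{E}_{p(x\mid t')\pi_\zeta(a\mid x,t')}[q(x,t',a)s_\zeta(x,t',a)]$.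 A time feature function $\phi$ maps times to labels; $\mathbb{I}_\phi(t,t')=\mathbb{I}\{\phi(t)=\phi(t')\}$, $p(\phi(t'))=\int_0^Tp(s)\mathbb{I}_\phi(s,t')ds$. $\hat f$ is a fixed regressor. The OPFV gradient estimator is $$\nabla_\zeta\hat V^{\mathrm{OPFV}}_{t'}(\pi_\zeta;\mathcal{D})=\frac1n\sum_{i=1}^n\left\{\frac{\mathbb{I}_\phi(t_i,t')}{p(\phi(t'))}\frac{\pi_\zeta(a_i\mid x_i,t')}{\pi_0(a_i\mid x_i,t_i)}\big(r_i-\hat f(x_i,t_i,a_i)\big)s_\zeta(x_i,t',a_i)+\mathbb{E}_{\pi_\zeta(a\mid x_i,t')}\big[\hat f(x_i,t',a)s_\zeta(x_i,t',a)\big]\right\}.$$ $\Delta_q(x,t,t',a)=q(x,t,a)-q(x,t',a)$, $\Delta_{\hat f}(x,t,t',a)=\hat f(x,t,a)-\hat f(x,t',a)$. *)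

(* Defs.v *)
From HB Require Import structures.
From mathcomp Require Import all_boot all_order all_algebra.
From mathcomp Require Import all_classical all_reals all_analysis.
Set Implicit Arguments. Unset Strict Implicit. Unset Printing Implicit Defensive.
Import Order.TTheory GRing.Theory Num.Theory.
Import numFieldNormedType.Exports.
Local Open Scope classical_set_scope.
Local Open Scope ring_scope.

Section OPFV.
Context {R : realType} {d : measure_display} {X : measurableType d} {A : finType}.

(* a logged record (x, t, a, r) *)
Definition record := (X * R * A * R)%type.

(* expected reward q(x,t,a) = E[r | x,t,a], reward distribution kappa x t a *)
Definition qfun (kappa : X -> R -> A -> probability R R) (x : X) (t : R) (a : A) : R :=
  \int[kappa x t a]_(r in setT) r.

(* score s_zeta(x,t,a) = grad_zeta log pi_zeta(a|x,t), as a row vector: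
   j-th component = directional derivative along the j-th basis vector *)
Definition score {k : nat} (pi : 'rV[R]_k -> X -> R -> A -> R)
  (zeta : 'rV[R]_k) (x : X) (t : R) (a : A) : 'rV[R]_k :=
  \row_j derive (fun z : 'rV[R]_k => ln (pi z x t a)) zeta (delta_mx 0 j).

Definition Iphi {L : eqType} (phi : R -> L) (t t' : R) : R := (phi t == phi t')%:R.

Definition p_phi {L : eqType} (pt : R -> R) (T : R) (phi : R -> L) (t' : R) : R :=
  \int[lebesgue_measure]_(s in `[0, T]) (pt s * Iphi phi s t').

(* expectation of a real function of one record drawn from
   x ~ px, t ~ pt (density on [0,T]), a ~ pi0(.|x,t), r ~ kappa x t a *)
Definition E_rec (px : probability X R) (pt : R -> R) (T : R)
  (pi0 : X -> R -> A -> R) (kappa : X -> R -> A -> probability R R)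
  (g : record -> R) : R :=
  \int[px]_(x in setT)
    \int[lebesgue_measure]_(t in `[0, T])
      (pt t * \sum_(a : A) pi0 x t a *
        \int[kappa x t a]_(r in setT) g (x, t, a, r)).

(* expectation over a dataset of n i.i.d. records (iterated integral of the
   n-fold product law), for a vector-valued function of the dataset *)
Fixpoint E_data_R (px : probability X R) (pt : R -> R) (T : R)
  (pi0 : X -> R -> A -> R) (kappa : X -> R -> A -> probability R R)
  (n : nat) (F : seq record -> R) : R :=
  match n with
  | 0 => F [::]
  | n'.+1 => E_rec px pt T pi0 kappa
              (fun z => E_data_R px pt T pi0 kappa n' (fun D => F (z :: D)))
  end.

Definition E_data {k : nat} (px : probability X R) (pt : R -> R) (T : R)
  (pi0 : X -> R -> A -> R) (kappa : X -> R -> A -> probability R R)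
  (n : nat) (F : seq record -> 'rV[R]_k) : 'rV[R]_k :=
  \row_j E_data_R px pt T pi0 kappa n (fun D => F D 0 j).

Definition opfv_grad {k : nat} {L : eqType} (pt : R -> R) (T : R) (phi : R -> L)
  (pi0 : X -> R -> A -> R) (fhat : X -> R -> A -> R)
  (pi : 'rV[R]_k -> X -> R -> A -> R) (zeta : 'rV[R]_k) (t' : R)
  (D : seq record) : 'rV[R]_k :=
  (size D)%:R^-1 *:
  \sum_(z <- D)
    let: (x, t, a, r) := z in
    ((Iphi phi t t' / p_phi pt T phi t') * (pi zeta x t' a / pi0 x t a)
       * (r - fhat x t a)) *: score pi zeta x t' a
    + \sum_(b : A) (pi zeta x t' b * fhat x t' b) *: score pi zeta x t' b.

Definition true_grad {k : nat} (pxt' : probability X R)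
  (kappa : X -> R -> A -> probability R R)
  (pi : 'rV[R]_k -> X -> R -> A -> R) (zeta : 'rV[R]_k) (t' : R) : 'rV[R]_k :=
  \row_j \int[pxt']_(x in setT)
     (\sum_(a : A) pi zeta x t' a * qfun kappa x t' a * score pi zeta x t' a 0 j).

End OPFV.

(* Main.v *)
Require Import Defs.
From HB Require Import structures.
From mathcomp Require Import all_boot all_order all_algebra.
From mathcomp Require Import all_classical all_reals all_analysis.
Import Order.TTheory GRing.Theory Num.Theory.
Import numFieldNormedType.Exports.
Local Open Scope classical_set_scope.
Local Open Scope ring_scope.
From mathcomp Require Import ring lra.
Lemma int_Zl {d} {T : measurableType d} {R : realType} (mu : {measure set T -> \bar R})
  (D : set T) (f : T -> R) (k : R) : measurable D ->
  mu.-integrable D (EFin \o f) -> mu.-integrable D (EFin \o (fun x => k * f x)).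
Proof.
move=> mD /(integrableZl mD k); apply: eq_integrable => // x _ /=; by rewrite EFinM.
Qed.

Lemma kappa_lin {R : realType} (P : probability R R) (rmax : R)
  (H : P `[0, rmax]%classic = 1%E) (g : R -> R) (u v : R) :
  (forall r, g r = u + v * r) ->
  \int[P]_(r in setT) g r = u + v * \int[P]_(r in setT) r.
Proof.
move=> Hg.
have mI : measurable (`[0, rmax]%classic : set R) by [].
have iid : P.-integrable setT (EFin \o (fun r : R => r)).
  have PN : P (~` `[0, rmax]%classic) = 0%E.
    by rewrite probability_setC // H subee.
  rewrite (negligible_integrable (measurableC mI) measurableT _ PN); last first.
    exact/measurable_realfun.measurable_EFinP/measurable_id.
  rewrite setTD setCK; apply: measurable_bounded_integrable => //.
  - by rewrite (le_lt_trans (probability_le1 P mI)) ?ltry.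
  - exists rmax; split; first by rewrite num_real.
    move=> M HM x /=; rewrite in_itv /= => /andP[x0 xr].
    by rewrite ger0_norm // ltW // (le_lt_trans xr).
rewrite (@eq_Rintegral _ _ _ P setT (fun r => u + v * r)); last by move=> r _; rewrite Hg.
rewrite (@RintegralD _ _ _ P setT (fun _ => u) (fun r => v * r)) //; last first.
  exact: int_Zl.
  exact: finite_measure_integrable_cst.
rewrite Rintegral_cst //.
rewrite RintegralZl //; congr (_ + _).
have h1 := probability_setT P.
by rewrite (_ : fine _ = 1) ?mulr1 // -[1]/(fine 1%E); congr fine.
Qed.
Theorem propositionF3
  (R : realType) (d : measure_display) (X : measurableType d) (A : finType)
  (L : eqType) (k : nat)
                                                                            
  (px pxt' : probability X R)
  (Hstat : pxt' = px)
  (T t' rmax : R) (HT : 0 <= T) (Ht' : T < t') (Hrmax : 0 <= rmax)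
                                                                     
  (pt : R -> R)
  (Hpt_meas : measurable_fun `[0, T] pt)
  (Hpt_ge0 : forall t, 0 <= t <= T -> 0 <= pt t)
  (Hpt1 : (\int[@lebesgue_measure R]_(t in `[0%R, T]%classic) (pt t)%:E)%E = 1%E)
                      
  (pi0 : X -> R -> A -> R)
  (Hpi0_pos : forall x t a, 0 <= t <= T -> 0 < pi0 x t a)
  (Hpi0_sum : forall x t, 0 <= t <= T -> \sum_(a : A) pi0 x t a = 1)
                                                  
  (kappa : X -> R -> A -> probability R R)
  (Hkappa : forall x t a, kappa x t a `[0, rmax]%classic = 1%E)
                             
  (phi : R -> L)
  (Hphi_meas : measurable (phi @^-1` [set phi t']))
  (Hpphi : 0 < p_phi pt T phi t')
                 
  (fhat : X -> R -> A -> R)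
                                                           
  (pi : 'rV[R]_k -> X -> R -> A -> R)
  (Hpi_ge0 : forall z x t a, 0 <= pi z x t a)
  (Hpi_sum : forall z x t, \sum_(a : A) pi z x t a = 1)
  (Hpi_diff : forall x t a z, differentiable (fun z' : 'rV[R]_k => pi z' x t a) z)
  (zeta : 'rV[R]_k)
                                                       
  (Hint : forall j : 'I_k, px.-integrable setT
     (fun x => (\sum_(a : A) pi zeta x t' a * qfun kappa x t' a
                  * score pi zeta x t' a 0 j)%:E))
                                                  
  (Hdelta : forall x a t, 0 <= t <= T -> Iphi phi t t' = 1 ->
     qfun kappa x t a - qfun kappa x t' a = fhat x t a - fhat x t' a)
  (n : nat) (Hn : (0 < n)%N) :
  E_data px pt T pi0 kappa n (opfv_grad pt T phi pi0 fhat pi zeta t')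
  = true_grad pxt' kappa pi zeta t'.
Proof.
subst pxt'.
set p := p_phi pt T phi t'.
have p0 : p != 0 by rewrite gt_eqF.
have mT : measurable (`[0, T]%classic : set R) by [].
have ipt : (@lebesgue_measure R).-integrable `[0, T]%classic (EFin \o pt).
  apply/integrableP; split; first exact/measurable_realfun.measurable_EFinP.
  have -> : (\int[lebesgue_measure]_(x in `[0%R, T]) `|(EFin \o pt) x| =
     \int[lebesgue_measure]_(x in `[0%R, T]) (pt x)%:E)%E; last by rewrite Hpt1 ltry.
  apply: eq_integral => t; rewrite inE /= in_itv /= => /andP[t0 tT].
  by rewrite ger0_norm // Hpt_ge0 // t0 tT.
have mI : measurable_fun `[0, T]%classic (fun t => Iphi phi t t').
  rewrite (_ : (fun t => Iphi phi t t') = \1_(phi @^-1` [set phi t'])).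
    exact: measurable_realfun.measurable_indic.
  apply/funext => t; rewrite /Iphi indicE; congr (_%:R); congr (nat_of_bool _).
  apply/idP/idP; rewrite inE //=.
  by move=> /eqP.
  by move=> ->.
have ipI : (@lebesgue_measure R).-integrable `[0, T]%classic
    (EFin \o (fun t => pt t * Iphi phi t t')).
  apply: (le_integrable _ _ _ ipt) => //.
    apply/measurable_realfun.measurable_EFinP; exact: measurable_realfun.measurable_funM.
  move=> t _; rewrite /= normrM /Iphi.
  by rewrite lee_fin; case: eqP => _; rewrite /= ?normr1 ?normr0 ?mulr1 ?mulr0.
have Rpt1 : \int[@lebesgue_measure R]_(t in `[0, T]%classic) pt t = 1.
  by rewrite /Rintegral Hpt1.
apply/rowP => j; rewrite !mxE.
pose h := fun z : (X * R * A * R)%type => let: (x, t, a, r) := z in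
  (Iphi phi t t' / p * (pi zeta x t' a / pi0 x t a) * (r - fhat x t a))
     * score pi zeta x t' a 0 j
  + \sum_(b : A) (pi zeta x t' b * fhat x t' b) * score pi zeta x t' b 0 j.
pose W := fun x => \sum_(a : A) pi zeta x t' a * qfun kappa x t' a * score pi zeta x t' a 0 j.
pose V := \int[px]_(x in setT) W x.
have Hcomp : forall D, opfv_grad pt T phi pi0 fhat pi zeta t' D 0 j
    = (size D)%:R^-1 * \sum_(z <- D) h z.
  move=> D; rewrite /opfv_grad mxE summxE; congr (_ * _).
  apply: eq_bigr => [[[[x t] a] r]] _; rewrite !mxE summxE /h /score.
  congr (_ + _); first by rewrite mxE.
  by apply: eq_bigr => b _; rewrite !mxE.
have Hcongr : forall m (F G : seq (X * R * A * R)%type -> R),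
    (forall D, size D = m -> F D = G D) ->
    E_data_R px pt T pi0 kappa m F = E_data_R px pt T pi0 kappa m G.
  elim => [|m IH] F G HFG /=; first exact: HFG.
  congr (E_rec _ _ _ _ _ _); apply: funext => z; apply: IH => D HD.
  by apply: HFG; rewrite /= HD.
have Hrec : forall c al, E_rec px pt T pi0 kappa (fun z => c + al * h z) = c + al * V.
  move=> c al; rewrite /E_rec.
  rewrite (@eq_Rintegral _ _ _ px setT (fun x => c + al * W x)); last first.
    move=> x _.
    pose B := \sum_(b : A) pi zeta x t' b * fhat x t' b * score pi zeta x t' b 0 j.
    pose G := \sum_(a : A) pi zeta x t' a *
       ((qfun kappa x t' a - fhat x t' a) * score pi zeta x t' a 0 j).
    rewrite (@eq_Rintegral _ _ _ lebesgue_measure `[0, T]%classic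
      (fun t => (c + al * B) * pt t + (al / p * G) * (pt t * Iphi phi t t'))); last first.
      move=> t; rewrite inE /= in_itv /= => /andP[t0 tT].
      have tI : 0 <= t <= T by rewrite t0 tT.
      rewrite (eq_bigr (fun a => pi0 x t a * (c + al * B) + al * (Iphi phi t t' / p) *
          (pi zeta x t' a * ((qfun kappa x t a - fhat x t a) * score pi zeta x t' a 0 j)))); last first.
        move=> a _; have pa : pi0 x t a != 0 by rewrite gt_eqF // Hpi0_pos.
        rewrite (@kappa_lin _ _ _ (Hkappa x t a) _
          (c + al * (B - Iphi phi t t' / p * (pi zeta x t' a / pi0 x t a) * fhat x t a * score pi zeta x t' a 0 j))
          (al * (Iphi phi t t' / p * (pi zeta x t' a / pi0 x t a)) * score pi zeta x t' a 0 j)).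
          by rewrite /qfun; field; rewrite p0 pa.
        move=> r; rewrite /B; ring.
      rewrite big_split /= -mulr_suml (Hpi0_sum x t tI) mul1r -mulr_sumr.
      case: (boolP (phi t == phi t')) => Hph.
        have I1 : Iphi phi t t' = 1 by rewrite /Iphi Hph.
        rewrite I1 /G (eq_bigr (fun a => pi zeta x t' a * ((qfun kappa x t' a - fhat x t' a) * score pi zeta x t' a 0 j))); first ring.
        move=> a _; have := Hdelta x a t tI I1 => HD.
        congr (_ * (_ * _)); lra.
      have I0 : Iphi phi t t' = 0 by rewrite /Iphi (negbTE Hph).
      rewrite I0; ring.
    rewrite (@RintegralD _ _ _ lebesgue_measure `[0, T]%classic
      (fun t => (c + al * B) * pt t) (fun t => al / p * G * (pt t * Iphi phi t t'))) //;
      [| exact: int_Zl | exact: int_Zl].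
    rewrite !RintegralZl // Rpt1.
    have -> : \int[lebesgue_measure]_(t in `[0, T]%classic) (pt t * Iphi phi t t') = p by [].
    have BG : B + G = W x.
      by rewrite /B /G /W -big_split; apply: eq_bigr => a _ /=; ring.
    by rewrite -BG; field.
  rewrite (@RintegralD _ _ _ px setT (fun _ => c) (fun x => al * W x)) //;
    [| exact: finite_measure_integrable_cst | exact: int_Zl (Hint j)].
  rewrite Rintegral_cst // RintegralZl //; last exact: Hint j.
  congr (_ + _).
  have h1 := probability_setT px.
  by rewrite (_ : fine _ = 1) ?mulr1 // -[1]/(fine 1%E); congr fine.
have Hsum : forall m c al, E_data_R px pt T pi0 kappa m
    (fun D => c + al * \sum_(z <- D) h z) = c + al * (m%:R * V).
  elim => [|m IH] c al /=; first by rewrite big_nil !mulr0 mul0r mulr0.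
  transitivity (E_rec px pt T pi0 kappa (fun z => (c + al * (m%:R * V)) + al * h z)).
    congr (E_rec _ _ _ _ _ _); apply: funext => z.
    transitivity (E_data_R px pt T pi0 kappa m
       (fun D => (c + al * h z) + al * \sum_(z' <- D) h z')).
      by congr (E_data_R _ _ _ _ _ _ _); apply: funext => D; rewrite big_cons mulrDr addrA.
    by rewrite IH -!addrA [al * h z + _]addrC.
  by rewrite Hrec -addrA -mulrDr mulrSr mulrDl mul1r.
rewrite (Hcongr n _ (fun D => 0 + n%:R^-1 * \sum_(z <- D) h z)); last first.
  by move=> D HD; rewrite Hcomp HD add0r.
rewrite Hsum add0r mulrA mulVf ?mul1r //.
by rewrite pnatr_eq0 -lt0n.
Qed.
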